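(* Let $\{M_p\mid p\in P\}$ be a Morse decomposition of a multivector field on a finite simplicial complex $K$, and let $S$ and $S'$ be the matrices output by ConMat on the filtered boundary matrices $A$ and $A'$ of two Morse fixed admissible enumerations of $K$. Then there exists a permutation matrix $R$ such that $R^{T}SR=S'$.
   Context: $K$ is a finite simplicial complex ($\tau\le\sigma$: $\tau$ is a face of $\sigma$; $\mathrm{cl}(\sigma)=\{\tau:\tau\le\sigma\}$). A multivector field $\mathcal V$ on $K$ is a partition of $K$ into convex sets $V$ (if $\sigma,\tau\in V$ and $\sigma\le\mu\le\tau$ then $\mu\in V$); $[\sigma]_{\mathcal V}$ is the part containing $\sigma$, $F_{\mathcal V}(\sigma)=[\sigma]_{\mathcal V}\cup\mathrm{cl}(\sigma)$, and a path is a sequence $\sigma_1,\dots,\sigma_r$ with $\sigma_k\in F_{\mathcal V}(\sigma_{k-1})$. A Morse decomposition indexed by a finite poset $(P,\le_P)$ is a partition $K=\bigsqcup_{p\in P}M_p$ such that every path from $M_p$ to $M_q$ has $q\le_P p$; $[\sigma]_P$ is the $p$ with $\sigma\in M_p$. An admissible enumeration is $\sigma_1,\dots,\sigma_n$ of all simplices of $K$ such that (a) for some linear extension $\le_{lin}$ of $\le_P$, $i\le j\Rightarrow[\sigma_i]_P\le_{lin}[\sigma_j]_P$; (b) if $\sigma_i$ is a proper face of $\sigma_j$ then $i<j$. Two admissible enumerations are Morse fixed if for every $p$ they induce the same order on $M_p$. The filtered boundary matrix is the $n\times n$ $\mathbb Z_2$-matrix with entry $(i,j)$ equal to $1$ iff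 $\sigma_i$ is a codimension-one face of $\sigma_j$. For a nonzero column $j$ of a matrix $B$, $\mathrm{low}_B(j)$ is the largest $i$ with $B[i,j]=1$. Column (and row) $j$ is homogeneous if nonzero and $\sigma_j$, $\sigma_{\mathrm{low}_B(j)}$ are in the same Morse set; then index $\mathrm{low}_B(j)$ is targetable. $J_h(B)$, $J_t(B)$: sets of homogeneous, targetable indices. Algorithm ConMat on $A$ (in place): for $j=1,\dots,n$: for $i=\mathrm{low}_A(j)$ down to $1$: if $A[i,j]=1$ and some column $s<j$ of the current matrix is homogeneous with $\mathrm{low}_A(s)=i$, add column $s$ to column $j$ (mod 2). With $A_{out}$ the result, let $J=\{1,\dots,n\}\setminus J_h(A_{out})\setminus J_t(A_{out})$; the output is the submatrix of $A_{out}$ on rows and columns in $J$ (in their original order). *)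

(* Defs.v *)
From HB Require Import structures.
From mathcomp Require Import all_boot all_algebra.
Set Implicit Arguments. Unset Strict Implicit. Unset Printing Implicit Defensive.
Import GRing.Theory.
Local Open Scope ring_scope.

Definition simplicial_complex (V : finType) (K : {set {set V}}) : Prop :=
  set0 \notin K /\
  forall sigma tau : {set V}, sigma \in K -> tau \subset sigma -> tau != set0 ->
    tau \in K.

Definition cl (V : finType) (K : {set {set V}}) (sigma : {set V}) : {set {set V}} :=
  [set tau in K | tau \subset sigma].

Definition codim1 (V : finType) (tau sigma : {set V}) : bool :=
  (tau \subset sigma) && (#|sigma| == #|tau|.+1).

Definition convex_in (V : finType) (K : {set {set V}}) (A : {set {set V}}) : Prop :=
  forall sigma tau mu : {set V}, sigma \in A -> tau \in A -> mu \in K ->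
    sigma \subset mu -> mu \subset tau -> mu \in A.

Definition multivector_field (V : finType) (K : {set {set V}})
    (mvf : {set {set {set V}}}) : Prop :=
  partition mvf K /\ forall A, A \in mvf -> convex_in K A.

Definition Fmv (V : finType) (K : {set {set V}}) (mvf : {set {set {set V}}})
    (sigma : {set V}) : {set {set V}} :=
  pblock mvf sigma :|: cl K sigma.

Definition mv_path (V : finType) (K : {set {set V}}) (mvf : {set {set {set V}}})
    (x : {set V}) (p : seq {set V}) : Prop :=
  all (fun s => s \in K) (x :: p) /\ path (fun a b => b \in Fmv K mvf a) x p.

Definition partial_order (P : finType) (le : rel P) : Prop :=
  reflexive le /\ antisymmetric le /\ transitive le.

Definition linear_extension (P : finType) (le lin : rel P) : Prop :=
  partial_order lin /\ total lin /\ (forall p q, le p q -> lin p q).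

(** * Morse decompositions, indexed by (P, leP); the Morse set M_p is
    [set sigma in K | mset sigma == p]. *)
Definition morse_decomposition (V : finType) (K : {set {set V}})
    (mvf : {set {set {set V}}}) (P : finType) (leP : rel P)
    (mset : {set V} -> P) : Prop :=
  partial_order leP /\
  forall (x : {set V}) (p : seq {set V}), mv_path K mvf x p ->
    leP (mset (last x p)) (mset x).

(** * Admissible enumerations: s = [:: sigma_1; ...; sigma_n] (0-indexed here) *)
Definition enumeration (V : finType) (K : {set {set V}}) (s : seq {set V}) : Prop :=
  uniq s /\ s =i K.

Definition admissible (V : finType) (K : {set {set V}}) (P : finType) (leP : rel P)
    (mset : {set V} -> P) (s : seq {set V}) : Prop :=
  enumeration K s /\
  (exists lin : rel P, linear_extension leP lin /\
     forall i j, i <= j -> j < size s ->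
       lin (mset (nth set0 s i)) (mset (nth set0 s j)))%N /\
  (forall i j, i < size s -> j < size s ->
     nth set0 s i \proper nth set0 s j -> i < j)%N.

Definition morse_fixed (V : finType) (P : finType) (mset : {set V} -> P)
    (s s' : seq {set V}) : Prop :=
  forall p : P, [seq x <- s | mset x == p] = [seq x <- s' | mset x == p].

Definition bdry_mx (V : finType) (s : seq {set V}) : 'M['F_2]_(size s) :=
  \matrix_(i, j) (if codim1 (nth set0 s i) (nth set0 s j) then 1 else 0).

(** * The ConMat algorithm, for an n x n matrix, with Morse labels
    lab i = index of the Morse set containing sigma_i (0-indexed). *)
Section ConMat.
Variables (n : nat) (P : eqType) (lab : nat -> P).

Definition nzcol (B : 'M['F_2]_n) (j : 'I_n) : bool := [exists i, B i j != 0].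

(** low_B(j): largest row index with a nonzero entry (only meaningful when
    column j is nonzero) *)
Definition low (B : 'M['F_2]_n) (j : 'I_n) : nat := \max_(i < n | B i j != 0%R) (i : nat).

Definition homogeneous (B : 'M['F_2]_n) (j : 'I_n) : bool :=
  nzcol B j && (lab j == lab (low B j)).

Definition targetable (B : 'M['F_2]_n) (i : 'I_n) : bool :=
  [exists j, homogeneous B j && (low B j == i)].

Definition addcol (B : 'M['F_2]_n) (s j : 'I_n) : 'M['F_2]_n :=
  \matrix_(a, b) (if b == j then B a j + B a s else B a b).

Definition step (B : 'M['F_2]_n) (j i : 'I_n) : 'M['F_2]_n :=
  if B i j != 0 then
    match [pick s : 'I_n | (s < j)%N && homogeneous B s && (low B s == i)] with
    | Some s => addcol B s j
    | None => B
    end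
  else B.

Definition process_col (B : 'M['F_2]_n) (j : 'I_n) : 'M['F_2]_n :=
  foldl (fun B' i => step B' j i) B (rev [seq i : 'I_n <- enum 'I_n | (nat_of_ord i <= low B j)%N]).

Definition conmat_full (A : 'M['F_2]_n) : 'M['F_2]_n :=
  foldl process_col A (enum 'I_n).

Definition conmat_J (A : 'M['F_2]_n) : {set 'I_n} :=
  [set i | ~~ homogeneous (conmat_full A) i && ~~ targetable (conmat_full A) i].

Definition conmat (A : 'M['F_2]_n) : 'M['F_2]_(#|conmat_J A|) :=
  \matrix_(a, b) conmat_full A (enum_val a) (enum_val b).

End ConMat.

Definition labels (V : finType) (P : finType) (mset : {set V} -> P)
    (s : seq {set V}) : nat -> P := fun i => mset (nth set0 s i).

(** A (not necessarily a priori square) permutation matrix: every row and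
    every column contains exactly one nonzero (= 1) entry. *)
Definition perm_matrix (m m' : nat) (R : 'M['F_2]_(m, m')) : bool :=
  [forall i, #|[set j | R i j != 0]| == 1%N] &&
  [forall j, #|[set i | R i j != 0]| == 1%N].

(* Main.v *)
Require Import Defs.
From HB Require Import structures.
From mathcomp Require Import all_boot all_algebra.
Set Implicit Arguments. Unset Strict Implicit. Unset Printing Implicit Defensive.
Import GRing.Theory.
Local Open Scope ring_scope.

Lemma F2_neq0 (x : 'F_2) : x != 0 -> x = 1.
Proof. by case: x => [[|[|]]] //= ? ?; apply/eqP. Qed.
Lemma F2_11 : (1 + 1 : 'F_2) = 0.
Proof. by apply/eqP. Qed.

Lemma map_filter_val (T1 T2 : Type) (f : T1 -> T2) (a : T2 -> bool) (s : seq T1) :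
  map f [seq x <- s | a (f x)] = [seq y <- map f s | a y].
Proof. by elim: s => //= x s IH; case: ifP => _ //=; rewrite IH. Qed.

Section Gen.
Variables (P : eqType) (leP : rel P) (n : nat) (lab : nat -> P).
Implicit Types (A B C F G : 'M['F_2]_n).

Lemma low_max B (i j : 'I_n) : B i j != 0 -> (i <= low B j)%N.
Proof. by move=> h; rewrite /low; apply: (leq_bigmax_cond (F := fun i : 'I_n => nat_of_ord i)). Qed.

Lemma low_ex B j : nzcol B j -> exists l : 'I_n, val l = low B j /\ B l j != 0.
Proof.
case/existsP=> i hi.
have h : (0 < #|[pred i | B i j != 0%R]|)%N by apply/card_gt0P; exists i.
case: (eq_bigmax_cond (fun i : 'I_n => nat_of_ord i) h) => l hl e.
by exists l; split=> //; rewrite /low -e.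
Qed.

Lemma colsame B C s : (forall i, B i s = C i s) ->
  [/\ low B s = low C s, nzcol B s = nzcol C s & homogeneous lab B s = homogeneous lab C s].
Proof.
move=> h.
have el : low B s = low C s by rewrite /low; apply: eq_bigl => i; rewrite h.
have en : nzcol B s = nzcol C s by rewrite /nzcol; apply: eq_existsb => i; rewrite h.
by split=> //; rewrite /homogeneous el en.
Qed.

Definition tri B (j : 'I_n) := forall i : 'I_n, B i j != 0 -> (i < j)%N && leP (lab i) (lab j).
Definition piv B (j s : 'I_n) := [&& (s < j)%N, homogeneous lab B s & leP (lab s) (lab j)].
Definition C1 A B j := exists c : 'I_n -> 'F_2,
  forall i, B i j = A i j + \sum_(s | piv B j s) c s * B i s.
Definition C2 B j := forall i : 'I_n, B i j != 0 -> forall s, piv B j s -> low B s != i.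

Definition Inv2 B B' j (m : nat) :=
  [/\ (forall i t, t != j -> B' i t = B i t),
   (exists c : 'I_n -> 'F_2, forall i, B' i j = B i j + \sum_(s | piv B j s) c s * B i s),
   tri B' j &
   (forall i : 'I_n, (m <= i)%N -> B' i j != 0 -> forall s, piv B j s -> low B s != i)].

Hypothesis leP_trans : transitive leP.

Lemma step_inv B B' j (i0 : 'I_n) : (forall t, tri B t) -> Inv2 B B' j i0.+1 ->
  Inv2 B (step lab B' j i0) j i0.
Proof.
move=> htri [hcol [c hc] htri' hC2].
have hcs s : s != j -> forall i, B' i s = B i s by move=> hs i; apply: hcol.
rewrite /Inv2 /step; case: ifP => hne; last first.
  split; [by [] | by exists c | by [] | ].
  move=> i; rewrite leq_eqVlt => /orP[/eqP e|hlt]; last exact: hC2.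
  have -> : i = i0 by apply/val_inj.
  by rewrite hne.
case: pickP => [s /andP[/andP[hsj hhom] /eqP hlow] | hnone]; last first.
  split; [by [] | by exists c | by [] | ].
  move=> i; rewrite leq_eqVlt => /orP[/eqP e|hlt]; last exact: hC2.
  have -> : i = i0 by apply/val_inj.
  move=> _ s /and3P[hsj hh hl]; apply/eqP => hls.
  have hsnj : s != j by rewrite -val_eqE /= ltn_eqF.
  case: (colsame (hcs s hsnj)) => el _ eh.
  by move: (hnone s); rewrite hsj eh hh el hls eqxx.
have hsnj : s != j by rewrite -val_eqE /= ltn_eqF.
case: (colsame (hcs s hsnj)) => el en eh.
have hpiv : piv B j s.
  rewrite /piv hsj -eh hhom /=.
  move: hhom => /andP[_ /eqP ->]; rewrite hlow.
  by case/andP: (htri' i0 hne).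
split.
- by move=> i t htj; rewrite mxE (negbTE htj) hcol.
- exists (fun t => c t + (t == s)%:R) => i.
  rewrite mxE eqxx hc hcs //.
  have -> : \sum_(t | piv B j t) (c t + (t == s)%:R) * B i t =
     \sum_(t | piv B j t) c t * B i t + \sum_(t | piv B j t) (t == s)%:R * B i t.
    by rewrite -big_split /=; apply: eq_bigr => t _; rewrite mulrDl.
  have -> : \sum_(t | piv B j t) (t == s)%:R * B i t = B i s.
    rewrite (bigD1 s) //= eqxx mul1r big1 ?addr0 //.
    by move=> t /andP[_ /negbTE ->]; rewrite mul0r.
  by rewrite addrA.
- move=> i; rewrite mxE eqxx.
  have [h|h] := eqVneq (B' i j) 0; last by move=> _; exact: htri' i h.
  rewrite h add0r hcs // => /htri /andP[his hl].
  case/and3P: hpiv => _ _ hsl.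
  by rewrite (ltn_trans his hsj) (leP_trans hl hsl).
- move=> i; rewrite leq_eqVlt => /orP[/eqP e|hlt].
    have -> : i = i0 by apply/val_inj.
    rewrite mxE eqxx.
    have [l [hl hnz]] := low_ex (proj1 (andP hhom)).
    have el0 : l = i0 by apply/val_inj; rewrite /= hl hlow.
    by rewrite (F2_neq0 hne) -el0 (F2_neq0 hnz) F2_11 eqxx.
  rewrite mxE eqxx.
  have -> : B' i s = 0.
    apply/eqP; apply: contraTT hlt => /low_max; rewrite hlow -leqNgt.
    by [].
  by rewrite addr0; apply: hC2.
Qed.

Lemma inner_foldr B j r m : (forall t, tri B t) -> map val r = iota m (size r) ->
  Inv2 B B j (m + size r) -> Inv2 B (foldr (fun x z => step lab z j x) B r) j m.
Proof.
move=> htri; elim: r m => [|x r IH] m /=; first by rewrite addn0.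
case=> hx hr hinv; rewrite -hx in hr hinv *; apply: step_inv => //.
by apply: IH => //; rewrite addSnnS.
Qed.

Lemma low_lt B (j : 'I_n) : (low B j < n)%N.
Proof.
have hn : (0 < n)%N by apply: leq_ltn_trans (leq0n j) (ltn_ord j).
apply: (@leq_ltn_trans n.-1); last by rewrite prednK.
by apply/bigmax_leqP => i _; rewrite -ltnS prednK.
Qed.

Lemma filter_iota_le L N : (L < N)%N -> [seq x <- iota 0 N | (x <= L)%N] = iota 0 L.+1.
Proof.
move=> hL; rewrite -(subnKC hL) iotaD filter_cat.
have -> : [seq x <- iota 0 L.+1 | (x <= L)%N] = iota 0 L.+1.
  by apply/all_filterP; apply/allP => x; rewrite mem_iota.
have -> : [seq x <- iota (0 + L.+1) (N - L.+1) | (x <= L)%N] = [::].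
  apply/eqP; rewrite -[_ == _]negbK -has_filter; apply/hasPn => x.
  by rewrite mem_iota add0n -ltnNge => /andP[].
by rewrite cats0.
Qed.

Lemma process_inv B j : (forall t, tri B t) -> Inv2 B (process_col lab B j) j 0.
Proof.
move=> htri; rewrite /process_col foldl_rev.
set r := [seq i <- enum 'I_n | _].
have hr : map (@nat_of_ord n) r = iota 0 (low B j).+1.
  rewrite /r (map_filter_val (@nat_of_ord n) (fun k => (k <= low B j)%N)).
  by rewrite val_enum_ord filter_iota_le // low_lt.
have hs : size r = (low B j).+1 by rewrite -(size_map (@nat_of_ord n)) hr size_iota.
apply: inner_foldr => //; first by rewrite hs.
rewrite add0n hs; split.
- by [].
- by exists (fun _ => 0) => i; rewrite big1 ?addr0 // => s _; rewrite mul0r.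
- exact: htri.
- by move=> i hi /low_max; rewrite leqNgt hi.
Qed.

Definition Inv1 A B (k : nat) :=
  [/\ (forall j : 'I_n, (k <= j)%N -> forall i, B i j = A i j),
      (forall t, tri B t) &
      (forall j : 'I_n, (j < k)%N -> C1 A B j /\ C2 B j)].

Lemma piv_same B B' (j : 'I_n) : (forall i u, u != j -> B' i u = B i u) ->
  forall t s : 'I_n, (t <= j)%N -> piv B' t s = piv B t s.
Proof.
move=> hcol t s htj; rewrite /piv; case: (ltnP s t) => //= hst.
have hsj : s != j by rewrite -val_eqE /= ltn_eqF // (leq_trans hst htj).
by case: (colsame (fun i => hcol i s hsj)) => _ _ ->.
Qed.

Lemma col_inv A B (j : 'I_n) : Inv1 A B j -> Inv1 A (process_col lab B j) j.+1.
Proof.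
case=> hA htri hpre.
have [hcol [c hc] htrij hC2] := process_inv j htri.
set B' := process_col lab B j in hcol hc htrij hC2 *; clearbody B'.
have hcs u : u != j -> forall i, B' i u = B i u by move=> hu i; apply: hcol.
split.
- move=> u hu i; have hun : u != j by rewrite -val_eqE /= gtn_eqF.
  by rewrite hcs // hA // ltnW.
- move=> u; have [->|hu] := eqVneq u j; first exact: htrij.
  by move=> i; rewrite hcs //; apply: htri.
- move=> u; rewrite ltnS leq_eqVlt => /orP[/eqP e|hlt].
    have -> : u = j by apply/val_inj.
    split.
      exists c => i; rewrite hc hA //.
      apply: congr1; apply: eq_big => s; first by rewrite (piv_same hcol).
      case/andP=> hsj _; rewrite hcs //.
      by rewrite -val_eqE /= ltn_eqF.
    move=> i hi s; rewrite (piv_same hcol) // => hp.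
    have hsj : s != j by case/andP: hp => hsj _; rewrite -val_eqE /= ltn_eqF.
    by case: (colsame (hcs s hsj)) => -> _ _; apply: hC2 hp.
  have hun : u != j by rewrite -val_eqE /= ltn_eqF.
  have [[c' hc'] hC2'] := hpre u hlt.
  split.
    exists c' => i; rewrite hcs // hc'.
    apply: congr1; apply: eq_big => s; first by rewrite (piv_same hcol) // ltnW.
    case/andP=> hsu _; rewrite hcs //.
    by rewrite -val_eqE /= ltn_eqF // (ltn_trans hsu hlt).
  move=> i; rewrite hcs // => hi s; rewrite (piv_same hcol); last exact: ltnW.
  move=> hp.
  have hsj : s != j.
    by case/andP: hp => hsu _; rewrite -val_eqE /= ltn_eqF // (ltn_trans hsu hlt).
  by case: (colsame (hcs s hsj)) => -> _ _; apply: hC2' hp.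
Qed.

Lemma outer_inv A B r k : Inv1 A B k -> map val r = iota k (size r) ->
  Inv1 A (foldl (process_col lab) B r) (k + size r).
Proof.
elim: r B k => [|x r IH] B k /=; first by rewrite addn0.
move=> hinv [hx hr]; rewrite -addSnnS; apply: IH; last by [].
by rewrite -hx; apply: col_inv; rewrite hx.
Qed.

Definition Spec A F := (forall t, tri F t) /\ (forall j, C1 A F j /\ C2 F j).

Lemma conmat_spec A : (forall t, tri A t) -> Spec A (conmat_full lab A).
Proof.
move=> htri; have := @outer_inv A A (enum 'I_n) 0.
rewrite val_enum_ord size_enum_ord add0n => /(_ _ erefl) [].
  by split.
by move=> _ h1 h2; split=> // j; apply: h2.
Qed.

Lemma low_neq F (s t : 'I_n) : reflexive leP -> (forall j, C2 F j) ->
  (s < t)%N -> homogeneous lab F s -> homogeneous lab F t -> low F s != low F t.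
Proof.
move=> hrefl hC2 hst hs ht; apply/eqP => e.
have [l [hl hnz]] := low_ex (proj1 (andP ht)).
have hp : piv F t s.
  rewrite /piv hst hs /=.
  move: hs ht => /andP[_ /eqP ->] /andP[_ /eqP ->]; rewrite e; exact: hrefl.
by move: (hC2 t l hnz s hp); rewrite e hl eqxx.
Qed.

Lemma spec_uniq A F G : reflexive leP -> Spec A F -> Spec A G -> F = G.
Proof.
move=> hrefl [hF1 hF] [hG1 hG].
have hC2F : forall j, C2 F j by move=> j; case: (hF j).
suff h : forall k, forall j : 'I_n, (j < k)%N -> forall i, F i j = G i j.
  by apply/matrixP => i j; apply: (h j.+1).
elim=> [|k IH] j; first by [].
rewrite ltnS leq_eqVlt => /orP[/eqP e|]; last exact: IH.
have hprev (s : 'I_n) : (s < j)%N -> forall i, G i s = F i s.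
  by move=> hs i; rewrite (IH s) // -e.
have hpv (s : 'I_n) : piv G j s = piv F j s.
  rewrite /piv; case: ltnP => //= hs.
  by case: (colsame (hprev s hs)) => _ _ ->.
have [[c hc] hC2j] := hF j.
have [[d hd] hC2Gj] := hG j.
have hd' i : G i j = A i j + \sum_(s | piv F j s) d s * F i s.
  rewrite hd; congr (_ + _); apply: eq_big => s; first by rewrite hpv.
  by case/andP=> hs _; rewrite hprev.
have hcd : forall s : 'I_n, piv F j s -> c s = d s.
  case: (pickP [pred s | piv F j s && (c s != d s)]) => [s0 hs0|hnone]; last first.
    by move=> s hs; move: (hnone s) => /=; rewrite hs /= => /negbFE /eqP.
  exfalso.
  case: (@arg_maxnP _ s0 [pred s | piv F j s && (c s != d s)] (fun s => low F s) hs0).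
  move=> s /andP[hps hcs] hmax.
  have hhs : homogeneous lab F s by case/and3P: hps.
  have [l [hl hnz]] := low_ex (proj1 (andP hhs)).
  have hdiff : F l j - G l j = \sum_(t | piv F j t) (c t - d t) * F l t.
    under eq_bigr do rewrite mulrBl.
    by rewrite sumrB hc hd' [A l j + _]addrC addrKA.
  have hsum : \sum_(t | piv F j t) (c t - d t) * F l t = (c s - d s) * F l s.
    rewrite (bigD1 s) //= big1 ?addr0 // => t /andP[hpt hts].
    have [ect|nct] := eqVneq (c t) (d t); first by rewrite ect subrr mul0r.
    have hlt : (low F t <= low F s)%N by apply: hmax; rewrite /= hpt nct.
    have hne : low F t != low F s.
      have hht : homogeneous lab F t by case/and3P: hpt.
      case: (ltngtP t s) => [h|h|h].
      - exact: low_neq.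
      - by rewrite eq_sym; apply: low_neq.
      - by move: hts; rewrite -val_eqE /= h eqxx.
    have -> : F l t = 0.
      apply/eqP; apply: contraNT hne => /low_max; rewrite hl => h2.
      by rewrite eqn_leq hlt h2.
    by rewrite mulr0.
  have hnz2 : F l j - G l j != 0.
    by rewrite hdiff hsum mulf_neq0 // subr_eq0.
  have [hFz|hFnz] := eqVneq (F l j) 0.
    have hGnz : G l j != 0 by move: hnz2; rewrite hFz sub0r oppr_eq0.
    have hpG : piv G j s by rewrite hpv.
    move: (hC2Gj l hGnz s hpG).
    have hsj : (s < j)%N by case/and3P: hps.
    by case: (colsame (hprev s hsj)) => -> _ _; rewrite hl eqxx.
  by move: (hC2j l hFnz s hps); rewrite hl eqxx.
move=> i; rewrite hc hd'; congr (_ + _); apply: eq_bigr => s hs.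
by rewrite hcd.
Qed.

Definition ordfr := forall s j : 'I_n, leP (lab s) (lab j) -> lab s != lab j -> (s < j)%N.

Lemma homog_char B s : ordfr -> tri B s ->
  homogeneous lab B s = [exists i, (B i s != 0) && (lab i == lab s)].
Proof.
move=> hord htri; apply/idP/existsP.
  case/andP=> hnz /eqP he; have [l [hl hnzl]] := low_ex hnz.
  by exists l; rewrite hnzl hl -he eqxx.
case=> i /andP[hi /eqP he]; rewrite /homogeneous.
have hnz : nzcol B s by apply/existsP; exists i.
rewrite hnz /=; have [l [hl hnzl]] := low_ex hnz.
have hil : (i <= l)%N by rewrite hl; apply: low_max.
rewrite -hl; apply/eqP/esym/eqP; apply: contraLR hil => hne.
case/andP: (htri l hnzl) => _ hle.
by rewrite -ltnNge; apply: hord; rewrite he.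
Qed.

End Gen.

Section Transport.
Variables (P : eqType) (leP : rel P) (n n' : nat) (lab lab' : nat -> P).
Variables (A : 'M['F_2]_n) (A' : 'M['F_2]_n') (pi : 'I_n -> 'I_n') (pinv : 'I_n' -> 'I_n).
Hypotheses (piK : cancel pi pinv) (pinvK : cancel pinv pi).
Hypotheses (hA : forall i j, A' (pi i) (pi j) = A i j) (hlab : forall i : 'I_n, lab' (pi i) = lab i).
Hypothesis (hord : forall i j : 'I_n, lab i = lab j -> (pi i < pi j)%N = (i < j)%N).
Hypotheses (ord1 : ordfr leP n lab) (ord2 : ordfr leP n' lab').
Hypotheses (leP_refl : reflexive leP) (leP_trans : transitive leP).
Variable F' : 'M['F_2]_n'.
Hypothesis (hF' : Spec leP lab' A' F').

Let G := \matrix_(i, j) F' (pi i) (pi j).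

Lemma lt_tr (s j : 'I_n) : leP (lab s) (lab j) -> (pi s < pi j)%N = (s < j)%N.
Proof.
move=> hle; have [e|ne] := eqVneq (lab s) (lab j); first exact: hord.
rewrite (ord1 hle ne); apply: ord2; rewrite !hlab //.
Qed.

Lemma G_tri t : tri leP lab G t.
Proof.
move=> i; rewrite mxE => /(proj1 hF' (pi t)) /andP[hlt]; rewrite !hlab => hle.
by rewrite hle -(lt_tr hle) hlt.
Qed.

Lemma hom_tr s : homogeneous lab G s = homogeneous lab' F' (pi s).
Proof.
rewrite (homog_char ord1 (@G_tri s)) (homog_char ord2 (proj1 hF' (pi s))).
apply/existsP/existsP => [[i hi]|[i hi]].
  by exists (pi i); move: hi; rewrite mxE !hlab.
exists (pinv i); move: hi; rewrite mxE pinvK -(hlab (pinv i)) pinvK hlab.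
by [].
Qed.

Lemma low_tr s (l : 'I_n) : homogeneous lab G s -> val l = low G s -> low F' (pi s) = pi l.
Proof.
move=> hh hl.
have hh' := hh; rewrite hom_tr in hh'.
have [l' [hl' hnz']] := low_ex (proj1 (andP hh')).
have hnzl : G l s != 0.
  have [l2 [hl2 hnz2]] := low_ex (proj1 (andP hh)).
  by have -> : l = l2 by apply/val_inj; rewrite hl hl2.
have hlabl : lab l = lab s by move: hh => /andP[_ /eqP]; rewrite -hl.
have hlabl' : lab' l' = lab s by move: hh' => /andP[_ /eqP]; rewrite -hl' hlab.
set a := pinv l'.
have hGa : G a s != 0 by rewrite mxE /a pinvK.
have hal : (a <= l)%N by rewrite hl; apply: low_max.
have hlaba : lab a = lab l by rewrite -(hlab a) /a pinvK hlabl' hlabl.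
have h1 : (pi a <= pi l)%N.
  move: hal; rewrite leq_eqVlt => /orP[/eqP e|h].
    by have -> : a = l by apply/val_inj.
  by apply: ltnW; rewrite hord.
have h2 : (pi l <= low F' (pi s))%N by apply: low_max; move: hnzl; rewrite mxE.
move: h1; rewrite /a pinvK hl' => h1.
by apply/eqP; rewrite eqn_leq h1 h2.
Qed.

Lemma piv_tr (j s : 'I_n) : piv leP lab G j s = piv leP lab' F' (pi j) (pi s).
Proof.
rewrite /piv !hlab hom_tr; case hle: (leP (lab s) (lab j)); last by rewrite !andbF.
by rewrite lt_tr.
Qed.

Lemma G_spec : Spec leP lab A G.
Proof.
split; first exact: G_tri.
move=> j; have [[c hc] hC2] := proj2 hF' (pi j); split.
  exists (fun t => c (pi t)) => i.
  rewrite mxE hc hA; congr (_ + _).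
  rewrite (reindex pi); last by exists pinv => x _; [apply: piK | apply: pinvK].
  apply: eq_big => t; first by rewrite piv_tr.
  by rewrite mxE.
move=> i; rewrite mxE => hi s; rewrite piv_tr => hp.
have hh : homogeneous lab G s by rewrite hom_tr; case/and3P: hp.
have [l [hl _]] := low_ex (proj1 (andP hh)).
rewrite -hl; apply/eqP => e.
have : low F' (pi s) != pi i by apply: hC2.
by rewrite (low_tr hh hl) (_ : l = i) ?eqxx //; apply/val_inj.
Qed.

Lemma transport_eq : (forall t, tri leP lab A t) ->
  conmat_full lab A = \matrix_(i, j) F' (pi i) (pi j).
Proof.
move=> htri; apply: (spec_uniq leP_refl (conmat_spec leP_trans htri)).
exact: G_spec.
Qed.

Definition Jp (m : nat) (lb : nat -> P) (B : 'M['F_2]_m) (i : 'I_m) :=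
  ~~ homogeneous lb B i && ~~ targetable lb B i.

Lemma J_tr i : Jp lab G i = Jp lab' F' (pi i).
Proof.
rewrite /Jp hom_tr; congr (_ && ~~ _).
apply/existsP/existsP => [[j /andP[hh /eqP hl]]|[j' /andP[hh /eqP hl]]].
  exists (pi j); rewrite -hom_tr hh /=.
  have := low_tr (l := i) hh (esym hl); move=> ->; by [].
exists (pinv j'); have hh2 : homogeneous lab G (pinv j') by rewrite hom_tr pinvK.
rewrite hh2 /=.
have [l [hl2 _]] := low_ex (proj1 (andP hh2)).
have := low_tr hh2 hl2; rewrite pinvK hl => /val_inj e.
by rewrite -hl2 -(piK l) -e piK.
Qed.

End Transport.

Lemma perm_final n n' (J : {set 'I_n}) (J' : {set 'I_n'}) (pi : 'I_n -> 'I_n') pinv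
  (piK : cancel pi pinv) (pinvK : cancel pinv pi)
  (hJ : forall i, (i \in J) = (pi i \in J')) (F : 'M['F_2]_n) (F' : 'M['F_2]_n')
  (hF : forall i j, F i j = F' (pi i) (pi j)) :
  exists R : 'M['F_2]_(#|J|, #|J'|), perm_matrix R /\
    R^T *m (\matrix_(a, b) F (enum_val a) (enum_val b)) *m R =
    \matrix_(a, b) F' (enum_val a) (enum_val b).
Proof.
pose R : 'M['F_2]_(#|J|, #|J'|) := \matrix_(a, b) (pi (enum_val a) == enum_val b)%:R.
have hR a b : (R a b != 0) = (pi (enum_val a) == enum_val b).
  rewrite mxE; have [e|ne] := eqVneq (pi (enum_val a)) (enum_val b).
    by [].

  by [].
have Hb (b : 'I_#|J'|) : pinv (enum_val b) \in J by rewrite hJ pinvK enum_valP.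
have Ha (a : 'I_#|J|) : pi (enum_val a) \in J' by rewrite -hJ enum_valP.
pose rk b := enum_rank_in (Hb b) (pinv (enum_val b)).
have hrk b : enum_val (rk b) = pinv (enum_val b) by rewrite /rk enum_rankK_in.
have hcol b a : (pi (enum_val a) == enum_val b) = (a == rk b).
  apply/eqP/eqP => [e|->]; last by rewrite hrk pinvK.
  by apply: enum_val_inj; rewrite hrk -e piK.
exists R; split.
  apply/andP; split; apply/forallP.
    move=> a; apply/eqP.
    have -> : [set b | R a b != 0] = [set enum_rank_in (Ha a) (pi (enum_val a))].
      apply/setP => b; rewrite !inE hR.
      apply/eqP/eqP => [e|->]; last by rewrite enum_rankK_in.
      by apply: enum_val_inj; rewrite enum_rankK_in.
    by rewrite cards1.
  move=> b; apply/eqP.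
  have -> : [set a | R a b != 0] = [set rk b].
    by apply/setP => a; rewrite !inE hR hcol.
  by rewrite cards1.
have hsum b (X : 'I_#|J| -> 'F_2) : \sum_a R a b * X a = X (rk b).
  rewrite (bigD1 (rk b)) //= big1 ?addr0.
    by rewrite mxE hcol eqxx mul1r.
  by move=> a ha; rewrite mxE hcol (negbTE ha) mul0r.
apply/matrixP => b b'; rewrite !mxE.
transitivity (\sum_i R i b' * (\sum_j R j b * F (enum_val j) (enum_val i))).
  apply: eq_bigr => i _; rewrite mulrC [R i b']mxE; congr (_ * _).
  by rewrite mxE; apply: eq_bigr => j _; rewrite !mxE.
by rewrite hsum hsum !hrk hF !pinvK.
Qed.

Lemma index_filter (T : eqType) (a : pred T) (x y : T) (s : seq T) : a x -> a y ->
  (index x s < index y s)%N = (index x (filter a s) < index y (filter a s))%N.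
Proof.
move=> ax ay; elim: s => //= z s IH.
have [ezx|nzx] := eqVneq z x.
  by move: ezx ax => <- az; rewrite az /= eqxx; case: (z == y).
have [ezy|nzy] := eqVneq z y.
  by move: ezy ay nzx => <- az nzx; rewrite az /= eqxx (negbTE nzx).
by case: (a z) => /=; rewrite ?(negbTE nzx) ?(negbTE nzy) /= ?ltnS.
Qed.

Lemma bdry_tri (V : finType) (K : {set {set V}}) mvf (P : finType) (leP : rel P) mset s :
  morse_decomposition K mvf leP mset -> admissible K leP mset s ->
  forall t, tri leP (labels mset s) (bdry_mx s) t.
Proof.
move=> [_ hpath] [[_ hmem] [_ hface]] t i; rewrite mxE.
case: ifP => [hc _|]; last by rewrite eqxx.
case/andP: hc => hsub /eqP hcard.
have hit : (i < t)%N by apply: hface; rewrite ?ltn_ord // properEcard hsub hcard ltnSn.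
rewrite hit /=.
have := hpath (nth set0 s t) [:: nth set0 s i]; apply.
split.
  by rewrite /= -!hmem !mem_nth.
rewrite /= andbT /Fmv in_setU /cl inE -hmem mem_nth //= hsub orbT.
by [].
Qed.

Lemma adm_ord (V : finType) (K : {set {set V}}) (P : finType) (leP : rel P) mset s :
  admissible K leP mset s -> ordfr leP (size s) (labels mset s).
Proof.
move=> [_ [[lin [[[_ [linA _]] [_ linext]] hlin]] _]] x j hle hne.
rewrite ltnNge; apply/negP => hjx.
have h1 := hlin j x hjx (ltn_ord x).
have h2 := linext _ _ hle.
by move: hne; rewrite (linA _ _ (introT andP (conj h2 h1))) eqxx.
Qed.

Unset Implicit Arguments.
Theorem corollary1 (V : finType) (K : {set {set V}}) (mvf : {set {set {set V}}})
    (P : finType) (leP : rel P) (mset : {set V} -> P) (s s' : seq {set V}) :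
  simplicial_complex K ->
  multivector_field K mvf ->
  morse_decomposition K mvf leP mset ->
  admissible K leP mset s ->
  admissible K leP mset s' ->
  morse_fixed mset s s' ->
  let S := conmat (labels mset s) (bdry_mx s) in
  let S' := conmat (labels mset s') (bdry_mx s') in
  exists R, perm_matrix R /\ R^T *m S *m R = S'.
Proof.
move=> _ _ hmd hs hs' hfix S S'.
have [[huniq hmem] _] := hs.
have [[huniq' hmem'] _] := hs'.
have [[hrefl [_ htrans]] _] := hmd.
have hin (i : 'I_(size s)) : nth set0 s i \in s' by rewrite hmem' -hmem mem_nth.
have hin' (i : 'I_(size s')) : nth set0 s' i \in s by rewrite hmem -hmem' mem_nth.
have hpi (i : 'I_(size s)) : (index (nth set0 s i) s' < size s')%N by rewrite index_mem.
have hpinv (i : 'I_(size s')) : (index (nth set0 s' i) s < size s)%N by rewrite index_mem.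
pose pi i := Ordinal (hpi i).
pose pinv i := Ordinal (hpinv i).
have hnth i : nth set0 s' (pi i) = nth set0 s i by rewrite /= nth_index.
have hnth' i : nth set0 s (pinv i) = nth set0 s' i by rewrite /= nth_index.
have piK : cancel pi pinv.
  by move=> i; apply/val_inj; rewrite /= hnth index_uniq.
have pinvK : cancel pinv pi.
  by move=> i; apply/val_inj; rewrite /= hnth' index_uniq.
have hA i j : bdry_mx s' (pi i) (pi j) = bdry_mx s i j by rewrite !mxE !hnth.
have hlab i : labels mset s' (pi i) = labels mset s i by rewrite /labels hnth.
have hord (i j : 'I_(size s)) : labels mset s i = labels mset s j -> (pi i < pi j)%N = (i < j)%N.
  rewrite /labels => e.
  set p := mset (nth set0 s i).
  have ai : (fun x => mset x == p) (nth set0 s i) by rewrite /= eqxx.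
  have aj : (fun x => mset x == p) (nth set0 s j) by rewrite /= -e eqxx.
  rewrite /= (@index_filter _ (fun x => mset x == p) _ _ s' ai aj) -hfix.
  rewrite -(@index_filter _ (fun x => mset x == p) _ _ s ai aj).
  by rewrite !index_uniq.
have ord1 := adm_ord hs.
have ord2 := adm_ord hs'.
have htri := bdry_tri hmd hs.
have htri' := bdry_tri hmd hs'.
have hspec' := conmat_spec htrans htri'.
have heq := transport_eq piK pinvK hA hlab hord ord1 ord2 hrefl htrans hspec' htri.
have hJ := J_tr piK pinvK hlab hord ord1 ord2 hspec'.
rewrite /S /S' /conmat.
apply: (perm_final piK pinvK).
  by move=> i; rewrite !inE -/(Jp _ _ _) -/(Jp _ _ _) heq hJ.
by move=> i j; rewrite heq mxE.
Qed.
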